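(* Let $\vec a\in\mathbb R^n_{>0}$ have rationally independent components, and suppose $\vec v\in\mathbb Z^n\setminus\mathbb Z^n_{\le0}$ satisfies $\mathfrak o^{\vec a}_{\vec v}=\mathfrak o^{\vec a}_k$ for some $k\in\mathbb Z_{\ge1}$. Then each component of $\vec v$ is at most the corresponding component of $\Gamma^{\vec a}_k$.
   Context: The Reeb orbits of $\partial E(\vec a)$ ($E(\vec a)=\{\pi\sum|z_j|^2/a_j\le1\}$, contact form $\lambda_{std}|$) are the iterates $\nu_j^m$ of the simple orbits $\nu_j$ on the coordinate axes, with action $ma_j$; $\mathfrak o^{\vec a}_k$ is the orbit of $k$-th smallest action. For $\vec v\in\mathbb Z^n\setminus\mathbb Z^n_{\le0}$, $\mathfrak o^{\vec a}_{\vec v}:=\nu_{i_M}^{v_{i_M}}$ with $i_M$ the index maximizing $a_iv_i$. $\Gamma^{\vec a}_k\in\mathbb Z^n_{\ge0}$ is the unique tuple $(w_1,\dots,w_n)$ with $\sum w_i=k$ minimizing $\max_i a_iw_i$. *)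

(* Defs.v *)
From HB Require Import structures.
From mathcomp Require Import all_boot all_order all_algebra.
From mathcomp Require Import reals.
Set Implicit Arguments. Unset Strict Implicit. Unset Printing Implicit Defensive.
Import Order.TTheory GRing.Theory Num.Theory.
Local Open Scope ring_scope.

Definition rat_indep (R : realType) (n : nat) (a : 'I_n -> R) : Prop :=
  forall q : 'I_n -> rat, \sum_(i < n) ratr (q i) * a i = 0 -> forall i, q i = 0.

(* A Reeb orbit of the boundary of E(a): the iterate nu_j^m, encoded as (j, m), m >= 1. *)
Definition orbit (n : nat) := ('I_n * nat)%type.
Definition is_orbit (n : nat) (o : orbit n) : Prop := (0 < o.2)%N.
Definition action (R : realType) (n : nat) (a : 'I_n -> R) (o : orbit n) : R :=
  (o.2)%:R * a o.1.

(* o is the orbit of k-th smallest action: o is an orbit and the orbits of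
   action <= action o are exactly k distinct orbits (o included). *)
Definition is_kth_orbit (R : realType) (n : nat) (a : 'I_n -> R) (k : nat)
    (o : orbit n) : Prop :=
  is_orbit o /\
  exists s : seq (orbit n),
    [/\ uniq s, size s = k,
        (forall p, p \in s -> is_orbit p /\ action a p <= action a o) &
        (forall p, is_orbit p -> action a p <= action a o -> p \in s)].

Definition is_orbit_of_vec (R : realType) (n : nat) (a : 'I_n -> R)
    (v : 'I_n -> int) (o : orbit n) : Prop :=
  exists iM : 'I_n,
    (forall i, a i * (v i)%:~R <= a iM * (v iM)%:~R) /\
    o = (iM, `|v iM|%N).

Definition max_aw (R : realType) (n : nat) (a : 'I_n -> R) (w : 'I_n -> nat) : R :=
  \big[Num.max/0]_(i < n) (a i * (w i)%:R).
Definition is_Gamma (R : realType) (n : nat) (a : 'I_n -> R) (k : nat)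
    (w : 'I_n -> nat) : Prop :=
  (\sum_(i < n) w i)%N = k /\
  forall w' : 'I_n -> nat, (\sum_(i < n) w' i)%N = k -> max_aw a w <= max_aw a w'.

(* Main.v *)
Require Import Defs.
From HB Require Import structures.
From mathcomp Require Import all_boot all_order all_algebra.
From mathcomp Require Import reals.
Import Order.TTheory GRing.Theory Num.Theory.
Local Open Scope ring_scope.

Lemma size_pairs (S : Type) (s : seq S) (t : S -> seq nat) :
  size [seq (x, y) | x <- s, y <- t x] = (\sum_(x <- s) size (t x))%N.
Proof.
elim: s => [|x s IH] /=; first by rewrite big_nil.
by rewrite big_cons size_cat size_map IH.
Qed.

Theorem mainTheorem13 (R : realType) (n : nat) (a : 'I_n -> R)
  (a_pos : forall i, 0 < a i) (a_indep : rat_indep a)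
  (v : 'I_n -> int) (v_notnonpos : exists i, 0 < v i)
  (k : nat) (k_ge1 : (1 <= k)%N)
  (hv : exists o, is_orbit_of_vec a v o /\ is_kth_orbit a k o) :
  forall w : 'I_n -> nat, is_Gamma a k w -> forall i, v i <= (w i)%:Z.
Proof.
move=> w [sw wmin] i.
case: hv => o [[iM [hM ->]] [horb [s [us ss hs1 hs2]]]].
set A := action a (iM, `|v iM|%N).
case: v_notnonpos => i0 hi0.
have vM : 0 < v iM.
  have h : 0 < a iM * (v iM)%:~R.
    apply: lt_le_trans (hM i0); rewrite mulr_gt0 // ltr0z //.
  by rewrite pmulr_rgt0 // ltr0z in h.
have Aeq : A = a iM * (v iM)%:~R.
  by rewrite /A /action /= mulrC -[v iM]gez0_abs ?ltW // -pmulrn.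
have A0 : 0 < A by rewrite Aeq mulr_gt0 // ltr0z.
pose u j := Num.truncn (A / a j).
have uP : forall j m, (m <= u j)%N = (m%:R * a j <= A).
  move=> j m; rewrite Num.Theory.truncn_ge_nat; last by rewrite divr_ge0 // ltW.
  by rewrite ler_pdivlMr.
pose t := [seq (x, y) | x <- index_enum 'I_n, y <- iota 1 (u x)].
have ut : uniq t.
  apply: allpairs_uniq_dep; first exact: index_enum_uniq.
    by move=> x _; apply: iota_uniq.
  by move=> [x1 y1] [x2 y2] _ _ /= [-> ->].
have ts : {subset t <= s}.
  move=> p /allpairsPdep [x [y [_ hy ->]]].
  move: hy; rewrite mem_iota => /andP [h1 h2].
  apply: hs2; first by [].
  rewrite -/A /action /= -uP -ltnS; by rewrite add1n in h2.
have sizet : size t = (\sum_(j < n) u j)%N.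
  by rewrite size_pairs; apply: eq_bigr => j _; rewrite size_iota.
have st : {subset s <= t}.
  case=> x y /hs1 [h1 h2]; apply/allpairsPdep; exists x, y; split => //.
    exact: mem_index_enum.
  rewrite mem_iota h1 add1n ltnS uP; move: h2; by rewrite -/A /action /=.
have sumu : (\sum_(j < n) u j)%N = k.
  apply/eqP; rewrite eqn_leq -sizet -ss !uniq_leq_size //.
have maxu : max_aw a (fun j => u j) <= A.
  rewrite /max_aw; apply: (big_ind (fun x => x <= A)); first exact: ltW.
    by move=> x y hx hy; rewrite ge_max hx hy.
  by move=> j _; rewrite mulrC -uP.
have maxw : forall j, a j * (w j)%:R <= max_aw a w.
  move=> j; rewrite /max_aw (bigD1 j) //= le_max lexx //.
have uw : forall j, (w j <= u j)%N.
  move=> j; rewrite uP mulrC; apply: (le_trans (maxw j)).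
  apply: le_trans maxu; exact: wmin.
have wu : (u i <= w i)%N.
  rewrite leqNgt; apply/negP => lt.
  have : (\sum_(j < n) w j < \sum_(j < n) u j)%N.
    rewrite (bigD1 i) //= [X in (_ < X)%N](bigD1 i) //=.
    rewrite -addSn leq_add // leq_sum // => j _; exact: uw.
  by rewrite sw sumu ltnn.
case: (lerP (v i) 0) => hvi; first exact: le_trans hvi _.
have vu : (`|v i|%N <= u i)%N.
  rewrite uP; have := hM i; rewrite -Aeq; apply: le_trans.
  by rewrite mulrC ler_pM2l // natr_absz ger0_norm // ltW.
have h := leq_trans vu wu.
by rewrite -lez_nat gez0_abs // ltW in h.
Qed.
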